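(* For any values of $k$, $\mu$, and $\nu$, \[ \,_{3}F_{4}\left(\tfrac{1}{2},\tfrac{\mu}{2}+\tfrac{\nu}{2}+\tfrac{1}{2},\tfrac{\mu}{2}+\tfrac{\nu}{2}+1;1,\mu+1,\nu+1,\mu+\nu+1;-k^{2}\right) = 2^{\mu+\nu}\Gamma(\mu+1)\Gamma(\nu+1)\sum_{L=0}^{\infty}\frac{(-1)^{2L}k^{4L}2^{-8L-\mu-\nu}\left(2-\delta_{L0}\right)}{(L!)^{2}\Gamma(L+\mu+1)\Gamma(L+\nu+1)} \,_{1}F_{2}\left(L+\tfrac{1}{2};2L+1,L+\mu+1;-\tfrac{k^{2}}{4}\right)\,_{1}F_{2}\left(L+\tfrac{1}{2};2L+1,L+\nu+1;-\tfrac{k^{2}}{4}\right). \]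
   Context: $\,_{p}F_{q}(a_1,\dots,a_p;b_1,\dots,b_q;z)=\sum_{n\ge0}\frac{(a_1)_n\cdots(a_p)_n}{(b_1)_n\cdots(b_q)_n}\frac{z^n}{n!}$ is the generalized hypergeometric function, with $(c)_n=\Gamma(c+n)/\Gamma(c)$ the Pochhammer symbol. $\delta_{L0}$ is the Kronecker delta (equal to $1$ if $L=0$ and $0$ otherwise). *)

(* Defs.v *)
From Stdlib Require Import Reals List Arith Factorial.
Import ListNotations.
From Coquelicot Require Import Coquelicot.
Open Scope R_scope.

Fixpoint poch (c : R) (n : nat) : R :=
  match n with
  | O => 1
  | S m => poch c m * (c + INR m)
  end.

Definition poch_list (l : list R) (n : nat) : R :=
  fold_right (fun c acc => poch c n * acc) 1 l.

Definition hyp_term (as_ bs : list R) (z : R) (n : nat) : R :=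
  poch_list as_ n / poch_list bs n * z ^ n / INR (fact n).

(* pFq(as; bs; z) = sum_{n>=0} (a_1)_n...(a_p)_n / ((b_1)_n...(b_q)_n) z^n/n!.
   (Here all series used are entire, so Series is the actual sum.) *)
Definition hypergeom (as_ bs : list R) (z : R) : R :=
  Series (hyp_term as_ bs z).

(* Euler's Gamma function on the reals, via the Gauss/Euler limit formula
   Gamma(x) = lim_{n->oo} n! n^x / (x (x+1) ... (x+n)),
   valid for every real x that is not a nonpositive integer. *)
Definition Gamma (x : R) : R :=
  real (Lim_seq (fun n => INR (fact n) * Rpower (INR n) x / poch x (S n))).

Definition not_nonpos_int (x : R) : Prop := forall n : nat, x <> - INR n.

Definition delta0 (L : nat) : R := match L with O => 1 | S _ => 0 end.

(* Main.v *)
Require Import Defs.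
From Stdlib Require Import Reals List Arith Factorial Lia Lra.
From Coquelicot Require Import Coquelicot.
Open Scope R_scope.

Lemma fr_pos n : 0 < INR (fact n).
Proof. apply lt_0_INR, lt_O_fact. Qed.

Lemma fr_S n : INR (fact (S n)) = INR (S n) * INR (fact n).
Proof. rewrite fact_simpl, mult_INR; reflexivity. Qed.

Lemma poch_S c m : poch c (S m) = poch c m * (c + INR m).
Proof. reflexivity. Qed.

Lemma poch_S_front c m : poch c (S m) = c * poch (c + 1) m.
Proof.
  induction m as [|m IH].
  - simpl. ring.
  - rewrite poch_S, IH, poch_S, S_INR. ring.
Qed.

Lemma poch_add c p m : poch c (p + m) = poch c p * poch (c + INR p) m.
Proof.
  induction m as [|m IH].
  - rewrite Nat.add_0_r; simpl; ring.
  - rewrite Nat.add_succ_r, !poch_S, IH, plus_INR. ring.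
Qed.

Lemma poch_nz c m : (forall j, c + INR j <> 0) -> poch c m <> 0.
Proof.
  intros H; induction m as [|m IH]; simpl.
  - lra.
  - apply Rmult_integral_contrapositive; split; auto.
Qed.

Lemma poch_pos c m : 0 < c -> 0 < poch c m.
Proof.
  intros H; induction m as [|m IH]; simpl.
  - lra.
  - apply Rmult_lt_0_compat; auto. pose proof (pos_INR m); lra.
Qed.

Lemma poch_zero c j m : c + INR j = 0 -> (j < m)%nat -> poch c m = 0.
Proof.
  intros H Hj; induction m as [|m IH].
  - lia.
  - rewrite poch_S. destruct (Nat.eq_dec j m) as [->|Hne].
    + rewrite H; ring.
    + rewrite IH by lia; ring.
Qed.

Lemma poch_nat k m : INR (fact (k + m)) = INR (fact k) * poch (INR k + 1) m.
Proof.
  induction m as [|m IH].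
  - rewrite Nat.add_0_r; simpl; ring.
  - rewrite Nat.add_succ_r, fr_S, IH, poch_S, S_INR, plus_INR. ring.
Qed.

Lemma poch_one m : poch 1 m = INR (fact m).
Proof.
  pose proof (poch_nat 0 m) as H. simpl in H. rewrite Rplus_0_l in H. lra.
Qed.

Lemma not_nonpos_shift c : not_nonpos_int c -> forall j, c + INR j <> 0.
Proof.
  intros H j E. apply (H j). lra.
Qed.

Lemma not_nonpos_add c L : not_nonpos_int c -> not_nonpos_int (c + INR L).
Proof.
  intros H n E. apply (H (n + L)%nat). rewrite plus_INR. lra.
Qed.

Lemma sf_ext a b N : (forall i, (i <= N)%nat -> a i = b i) -> sum_f_R0 a N = sum_f_R0 b N.
Proof. apply sum_eq. Qed.

Lemma sf_shift a N : sum_f_R0 a (S N) = a 0%nat + sum_f_R0 (fun i => a (S i)) N.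
Proof.
  induction N as [|N IH]; simpl in *; [ring|]. rewrite IH. ring.
Qed.

Lemma sf_S a N : sum_f_R0 a (S N) = sum_f_R0 a N + a (S N).
Proof. reflexivity. Qed.

Lemma sf_plus a b N : sum_f_R0 (fun i => a i + b i) N = sum_f_R0 a N + sum_f_R0 b N.
Proof. induction N as [|N IH]; simpl; [ring|]. rewrite IH; ring. Qed.

Lemma sf_scal c a N : sum_f_R0 (fun i => c * a i) N = c * sum_f_R0 a N.
Proof. induction N as [|N IH]; simpl; [ring|]. rewrite IH; ring. Qed.

Lemma sf_zero N : sum_f_R0 (fun _ => 0) N = 0.
Proof. induction N as [|N IH]; simpl; [ring|]. rewrite IH; ring. Qed.

Definition phi (X : R) (m : nat) : R := poch (X - INR m + 1) m / INR (fact m).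

Lemma phi_0 X : phi X 0 = 1.
Proof. unfold phi; simpl; field. Qed.

Lemma phi_rec X m : INR (S m) * phi X (S m) = (X - INR m) * phi X m.
Proof.
  unfold phi. rewrite poch_S_front, fr_S.
  replace (X - INR (S m) + 1) with (X - INR m) by (rewrite S_INR; ring).
  replace (X - INR m + 1) with (X - INR m + 1) by ring.
  pose proof (fr_pos m). assert (INR (S m) <> 0) by (apply not_0_INR; lia).
  field. lra.
Qed.

Lemma vandermonde X Y n :
  sum_f_R0 (fun p => phi X (n - p) * phi Y p) n = phi (X + Y) n.
Proof.
  induction n as [|n IH].
  - simpl. rewrite !phi_0. ring.
  - apply (Rmult_eq_reg_l (INR (S n))); [|apply not_0_INR; lia].
    rewrite phi_rec, <- IH.
    transitivity (sum_f_R0 (fun p => INR (S n - p) * phi X (S n - p) * phi Y p) (S n)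
                + sum_f_R0 (fun p => phi X (S n - p) * (INR p * phi Y p)) (S n)).
    { rewrite <- sf_plus, <- sf_scal. apply sf_ext. intros i Hi.
      rewrite minus_INR by lia. ring. }
    rewrite sf_shift with (a := fun p => phi X (S n - p) * (INR p * phi Y p)).
    simpl (INR 0). rewrite Rmult_0_l, Rmult_0_r, Rplus_0_l.
    rewrite sf_S. rewrite Nat.sub_diag. simpl (INR 0).
    rewrite Rmult_0_l, Rmult_0_l, Rplus_0_r.
    rewrite <- sf_plus, <- sf_scal. apply sf_ext. intros i Hi.
    replace (S n - i)%nat with (S (n - i)) by lia.
    replace (S n - S i)%nat with (n - i)%nat by lia.
    pose proof (phi_rec X (n - i)) as E1. pose proof (phi_rec Y i) as E2.
    replace (INR (S (n - i)) * phi X (S (n - i)) * phi Y i) with ((INR (S (n - i)) * phi X (S (n - i))) * phi Y i) by ring.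
    rewrite E1.
    replace (phi X (n - i) * (INR (S i) * phi Y (S i))) with (phi X (n - i) * (INR (S i) * phi Y (S i))) by ring.
    rewrite E2.
    rewrite minus_INR by lia. ring.
Qed.

Lemma phi_nat_le A j : (j <= A)%nat ->
  phi (INR A) j = INR (fact A) / (INR (fact j) * INR (fact (A - j))).
Proof.
  intros H. unfold phi.
  replace (INR A - INR j + 1) with (INR (A - j) + 1) by (rewrite minus_INR by lia; ring).
  pose proof (poch_nat (A - j) j) as E. replace (A - j + j)%nat with A in E by lia.
  pose proof (fr_pos j); pose proof (fr_pos (A - j)).
  rewrite E. field. lra.
Qed.

Lemma phi_nat_gt A j : (A < j)%nat -> phi (INR A) j = 0.
Proof.
  intros H. unfold phi. rewrite (poch_zero _ (j - A - 1)).
  - unfold Rdiv; ring.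
  - rewrite !minus_INR by lia. simpl. ring.
  - lia.
Qed.

Lemma phi_nat_nonneg A j : 0 <= phi (INR A) j.
Proof.
  destruct (le_lt_dec j A).
  - rewrite phi_nat_le by auto. pose proof (fr_pos A); pose proof (fr_pos j); pose proof (fr_pos (A-j)).
    apply Rlt_le, Rdiv_lt_0_compat; auto. apply Rmult_lt_0_compat; auto.
  - rewrite phi_nat_gt by auto; lra.
Qed.

Lemma phi_nat_sym A j : (j <= A)%nat -> phi (INR A) (A - j) = phi (INR A) j.
Proof.
  intros H. rewrite !phi_nat_le by lia. replace (A - (A - j))%nat with j by lia. field.
  split; apply Rgt_not_eq, fr_pos.
Qed.

Definition Bc (P L : nat) : R := phi (INR (2 * P)) (P + L).

Lemma Bc_nonneg P L : 0 <= Bc P L.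
Proof. apply phi_nat_nonneg. Qed.

Lemma Bc_gt P L : (P < L)%nat -> Bc P L = 0.
Proof. intros; unfold Bc; apply phi_nat_gt; lia. Qed.

Lemma Bc_sym P L : (L <= P)%nat -> phi (INR (2 * P)) (P - L) = Bc P L.
Proof.
  intros H. unfold Bc. rewrite <- phi_nat_sym by lia. f_equal. lia.
Qed.

Lemma sf_rev a N : sum_f_R0 (fun L => a (N - L)%nat) N = sum_f_R0 a N.
Proof.
  revert a; induction N as [|N IH]; intros a.
  - reflexivity.
  - rewrite sf_S, Nat.sub_diag, sf_shift.
    assert (E: sum_f_R0 (fun L => a (S N - L)%nat) N = sum_f_R0 (fun L => a (S (N - L))) N)
      by (apply sf_ext; intros; f_equal; lia).
    rewrite E, (IH (fun i => a (S i))). ring.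
Qed.

Lemma sf_split a Q m :
  sum_f_R0 a (S (Q + m)) = sum_f_R0 a Q + sum_f_R0 (fun i => a (S (Q + i))) m.
Proof.
  induction m as [|m IH].
  - cbn [sum_f_R0]. rewrite Nat.add_0_r. reflexivity.
  - rewrite Nat.add_succ_r, sf_S, IH, sf_S, Nat.add_succ_r. ring.
Qed.

Lemma sf_zero_ext a N m : (forall i, (N < i)%nat -> a i = 0) ->
  sum_f_R0 a (N + m) = sum_f_R0 a N.
Proof.
  intros H. destruct m as [|m]. { rewrite Nat.add_0_r; reflexivity. }
  rewrite Nat.add_succ_r, sf_split.
  assert (E: sum_f_R0 (fun i => a (S (N+i))) m = 0).
  { rewrite <- (sf_zero m). apply sf_ext. intros; apply H; lia. }
  rewrite E; ring.
Qed.

Definition delta2 (L : nat) : R := 2 - delta0 L.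

Lemma delta2_split L : delta2 L = 1 + (1 - delta0 L).
Proof. unfold delta2; ring. Qed.

Lemma V_identity P Q :
  sum_f_R0 (fun L => delta2 L * Bc P L * Bc Q L) (Q + P) = phi (INR (2 * (Q + P))) (Q + P).
Proof.
  replace (INR (2 * (Q + P))) with (INR (2 * P) + INR (2 * Q)) by (rewrite <- plus_INR; f_equal; lia).
  rewrite <- (vandermonde (INR (2 * P)) (INR (2 * Q)) (Q + P)).
  assert (Part1 : sum_f_R0 (fun j => phi (INR (2 * P)) (Q + P - j) * phi (INR (2 * Q)) j) Q
                = sum_f_R0 (fun L => Bc P L * Bc Q L) Q).
  { rewrite <- sf_rev. apply sf_ext. intros L HL.
    replace (Q + P - (Q - L))%nat with (P + L)%nat by lia.
    rewrite Bc_sym by lia. reflexivity. }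
  assert (First : sum_f_R0 (fun L => Bc P L * Bc Q L) (Q + P) = sum_f_R0 (fun L => Bc P L * Bc Q L) Q).
  { apply sf_zero_ext. intros i Hi. rewrite (Bc_gt Q i) by lia. ring. }
  rewrite (sf_ext _ (fun L => Bc P L * Bc Q L + (1 - delta0 L) * (Bc P L * Bc Q L)))
    by (intros; rewrite delta2_split; ring).
  rewrite sf_plus, First.
  destruct P as [|m].
  - rewrite (sf_ext (fun L => (1 - delta0 L) * (Bc 0 L * Bc Q L)) (fun _ => 0)).
    + rewrite sf_zero, Nat.add_0_r, <- Part1. replace (Q + 0)%nat with Q by lia. ring.
    + intros [|L] _; simpl; [ring|]. rewrite (Bc_gt 0 (S L)) by lia. ring.
  - pose proof (sf_split (fun j => phi (INR (2 * S m)) (Q + S m - j) * phi (INR (2 * Q)) j) Q m) as Sp.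
    replace (S (Q + m)) with (Q + S m)%nat in Sp by lia. cbv beta in Sp.
    rewrite Sp, Part1.
    assert (Sh : sum_f_R0 (fun i => (1 - delta0 i) * (Bc (S m) i * Bc Q i)) (Q + S m)
      = sum_f_R0 (fun i => (1 - delta0 (S i)) * (Bc (S m) (S i) * Bc Q (S i))) (Q + m)).
    { replace (Q + S m)%nat with (S (Q+m)) by lia. rewrite sf_shift. simpl (delta0 0). ring. }
    rewrite Sh.
    assert (Part2 : sum_f_R0 (fun i => (1 - delta0 (S i)) * (Bc (S m) (S i) * Bc Q (S i))) (Q + m)
       = sum_f_R0 (fun i => phi (INR (2 * S m)) (Q + S m - S (Q + i)) * phi (INR (2 * Q)) (S (Q + i))) m).
    { replace (Q + m)%nat with (m + Q)%nat by lia. rewrite sf_zero_ext.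
      - apply sf_ext. intros i Hi. simpl (delta0 (S i)).
        replace (Q + S m - S (Q + i))%nat with (S m - S i)%nat by lia.
        rewrite Bc_sym by lia. unfold Bc. replace (Q + S i)%nat with (S (Q + i)) by lia. ring.
      - intros i Hi. rewrite (Bc_gt (S m) (S i)) by lia. ring. }
    rewrite Part2. ring.
Qed.

Lemma phi_central n : phi (INR (2 * n)) n = INR (fact (2 * n)) / (INR (fact n) * INR (fact n)).
Proof. rewrite phi_nat_le by lia. replace (2 * n - n)%nat with n by lia. reflexivity. Qed.

Lemma fr_2S n : INR (fact (2 * S n)) = INR (2 * n + 2) * INR (2 * n + 1) * INR (fact (2 * n)).
Proof.
  replace (2 * S n)%nat with (S (S (2 * n))) by lia. rewrite !fr_S.
  replace (S (S (2 * n))) with (2 * n + 2)%nat by lia. replace (S (2 * n)) with (2 * n + 1)%nat by lia. ring.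
Qed.

Lemma poch_half n : poch (1/2) n * 4 ^ n * INR (fact n) = INR (fact (2 * n)).
Proof.
  induction n as [|n IH].
  - simpl. ring.
  - rewrite poch_S, fr_2S, <- IH, fr_S. rewrite !plus_INR, !mult_INR, !S_INR. simpl. field.
Qed.

Lemma poch_dup c n : poch c n * poch (c + 1/2) n * 4 ^ n = poch (2 * c) (2 * n).
Proof.
  induction n as [|n IH].
  - simpl. ring.
  - replace (2 * S n)%nat with (S (S (2 * n))) by lia. rewrite !poch_S, <- IH.
    rewrite !S_INR, !mult_INR. simpl. field.
Qed.

Lemma bessel_prod a b n :
  (forall j, a + INR j <> 0) -> (forall j, b + INR j <> 0) ->
  sum_f_R0 (fun p => / (INR (fact p) * poch a p * INR (fact (n - p)) * poch b (n - p))) n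
  = poch (a + b + INR n - 1) n / (INR (fact n) * poch a n * poch b n).
Proof.
  intros Ha Hb.
  pose proof (poch_nz a n Ha) as Han. pose proof (poch_nz b n Hb) as Hbn.
  pose proof (fr_pos n).
  transitivity (sum_f_R0 (fun p => phi (a + INR n - 1) (n - p) * phi (b + INR n - 1) p) n
                / (poch a n * poch b n)).
  - unfold Rdiv. rewrite Rmult_comm, <- sf_scal. apply sf_ext. intros p Hp.
    unfold phi.
    replace (a + INR n - 1 - INR (n - p) + 1) with (a + INR p) by (rewrite minus_INR by lia; ring).
    replace (b + INR n - 1 - INR p + 1) with (b + INR (n - p)) by (rewrite minus_INR by lia; ring).
    pose proof (poch_add a p (n - p)) as E1. replace (p + (n - p))%nat with n in E1 by lia.
    pose proof (poch_add b (n - p) p) as E2. replace (n - p + p)%nat with n in E2 by lia.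
    rewrite E1, E2.
    pose proof (poch_nz a p Ha). pose proof (poch_nz b (n - p) Hb).
    pose proof (fr_pos p). pose proof (fr_pos (n - p)).
    assert (poch (a + INR p) (n - p) <> 0).
    { apply poch_nz. intros j. rewrite Rplus_assoc, <- plus_INR. apply Ha. }
    assert (poch (b + INR (n - p)) p <> 0).
    { apply poch_nz. intros j. rewrite Rplus_assoc, <- plus_INR. apply Hb. }
    field. repeat split; lra.
  - rewrite vandermonde. unfold phi.
    replace (a + INR n - 1 + (b + INR n - 1) - INR n + 1) with (a + b + INR n - 1) by ring.
    field. repeat split; lra.
Qed.

Definition hterm (L : nat) (a w : R) (i : nat) : R :=
  hyp_term (INR L + 1/2 :: nil) (2 * INR L + 1 :: INR L + a :: nil) w i.

Definition Xf (L : nat) (a w : R) (i : nat) : R :=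
  hterm L a w i * (w ^ L / (4 ^ L * INR (fact L) * poch a L)).

Lemma Xf_closed L a w i : (forall j, a + INR j <> 0) ->
  Xf L a w i = Bc (L + i) L * (w / 4) ^ (L + i) / (INR (fact (L + i)) * poch a (L + i)).
Proof.
  intros Ha. unfold Xf, hterm, hyp_term, poch_list. simpl fold_right.
  unfold Bc. rewrite phi_nat_le by lia.
  replace (2 * (L + i) - (L + i + L))%nat with i by lia.
  replace (L + i + L)%nat with (2 * L + i)%nat by lia.
  pose proof (poch_half (L + i)) as H1. pose proof (poch_half L) as H2.
  rewrite poch_add in H1.
  pose proof (poch_nat (2 * L) i) as H3.
  replace (INR (2 * L)) with (2 * INR L) in H3 by (rewrite mult_INR; simpl; ring).
  pose proof (poch_add a L i) as H4.
  replace (a + INR L) with (INR L + a) in H4 by ring.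
  replace (1 / 2 + INR L) with (INR L + 1/2) in H1 by ring.
  pose proof (fr_pos L). pose proof (fr_pos i). pose proof (fr_pos (L + i)).
  pose proof (fr_pos (2 * L)). pose proof (fr_pos (2 * L + i)).
  pose proof (poch_nz a L Ha). pose proof (poch_nz a (L + i) Ha).
  assert (poch (INR L + a) i <> 0).
  { apply poch_nz. intros j. replace (INR L + a + INR j) with (a + INR (L + j)) by (rewrite plus_INR; ring). apply Ha. }
  assert (poch (1/2) L <> 0) by (apply poch_nz; intros j; pose proof (pos_INR j); lra).
  assert (poch (2 * INR L + 1) i <> 0) by (apply poch_nz; intros j; pose proof (pos_INR j); pose proof (pos_INR L); lra).
  assert (P4: forall m, 4 ^ m <> 0) by (intros; apply pow_nonzero; lra).
  rewrite pow_add in H1.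
  assert (E: poch (INR L + 1/2) i = INR (fact (2*(L+i))) * INR (fact L) / (INR (fact (2*L)) * 4^i * INR (fact (L+i)))).
  { rewrite <- H1, <- H2. field. repeat split; auto; lra. }
  assert (E2: poch (2 * INR L + 1) i = INR (fact (2 * L + i)) / INR (fact (2 * L))).
  { rewrite H3. field. lra. }
  rewrite E, E2, H4.
  unfold Rdiv. rewrite Rpow_mult_distr, pow_add, <- Rinv_pow by lra.
  rewrite pow_add.
  field. repeat split; auto; lra.
Qed.

Lemma sf_switch (u : nat -> nat -> R) m n :
  sum_f_R0 (fun i => sum_f_R0 (u i) n) m = sum_f_R0 (fun j => sum_f_R0 (fun i => u i j) m) n.
Proof.
  rewrite <- !sum_n_Reals.
  rewrite (sum_n_ext (fun i => sum_f_R0 (u i) n) (fun i => sum_n (u i) n))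
    by (intros; rewrite sum_n_Reals; reflexivity).
  rewrite (sum_n_ext (fun j => sum_f_R0 (fun i => u i j) m) (fun j => sum_n (fun i => u i j) m))
    by (intros; rewrite sum_n_Reals; reflexivity).
  apply sum_n_switch.
Qed.

Lemma sf_front_zero g L m : (forall P, (P < L)%nat -> g P = 0) ->
  sum_f_R0 g (L + m) = sum_f_R0 (fun i => g (L + i)%nat) m.
Proof.
  intros H. destruct L as [|l].
  - simpl. reflexivity.
  - replace (S l + m)%nat with (S (l + m)) by lia. rewrite sf_split.
    assert (E: sum_f_R0 g l = 0).
    { rewrite <- (sf_zero l). apply sf_ext. intros; apply H; lia. }
    rewrite E, Rplus_0_l. apply sf_ext. intros i _. f_equal.
Qed.

Definition indf (L P n : nat) : R := if andb (L <=? P) (P + L <=? n) then 1 else 0.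

Lemma reindex f L n : (2 * L <= n)%nat ->
  sum_f_R0 (fun i => f (L + i)%nat) (n - 2 * L) = sum_f_R0 (fun P => indf L P n * f P) n.
Proof.
  intros H.
  replace n with (L + (n - 2 * L) + L)%nat at 2 by lia.
  rewrite sf_zero_ext.
  - rewrite sf_front_zero.
    + apply sf_ext. intros i Hi. unfold indf.
      replace ((L <=? L + i) && (L + i + L <=? n))%bool with true. { ring. }
      symmetry. apply andb_true_intro. split; apply Nat.leb_le; lia.
    + intros P HP. unfold indf. replace (L <=? P) with false by (symmetry; apply Nat.leb_gt; lia).
      simpl. ring.
  - intros P HP. unfold indf. replace (P + L <=? n) with false by (symmetry; apply Nat.leb_gt; lia).
    rewrite Bool.andb_false_r. ring.
Qed.

Lemma reindex_zero f L n : (n < 2 * L)%nat ->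
  sum_f_R0 (fun P => indf L P n * f P) n = 0.
Proof.
  intros H. rewrite <- (sf_zero n). apply sf_ext. intros P HP. unfold indf.
  destruct (L <=? P) eqn:E1; simpl; [|ring].
  apply Nat.leb_le in E1. replace (P + L <=? n) with false by (symmetry; apply Nat.leb_gt; lia). ring.
Qed.

Lemma indf_01 L P n : indf L P n = 0 \/ (indf L P n = 1 /\ (L <= P)%nat /\ (P + L <= n)%nat).
Proof.
  unfold indf. destruct (L <=? P) eqn:E1; destruct (P + L <=? n) eqn:E2; simpl; auto.
  right. apply Nat.leb_le in E1, E2. auto.
Qed.

Definition Cf (L : nat) (a b w : R) (n : nat) : R :=
  sum_f_R0 (fun P => indf L P n * (delta2 L * Xf L a w (P - L) * Xf L b w (n - P - L))) n.

Lemma inner_L a b w n P : (forall j, a + INR j <> 0) -> (forall j, b + INR j <> 0) -> (P <= n)%nat ->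
  sum_f_R0 (fun L => indf L P n * (delta2 L * Xf L a w (P - L) * Xf L b w (n - P - L))) n
  = (w / 4) ^ n / (INR (fact P) * poch a P * INR (fact (n - P)) * poch b (n - P))
    * phi (INR (2 * n)) n.
Proof.
  intros Ha Hb HP.
  pose proof (V_identity P (n - P)) as V. replace (n - P + P)%nat with n in V by lia.
  rewrite <- V, <- sf_scal. apply sf_ext. intros L HL.
  pose proof (fr_pos P). pose proof (fr_pos (n - P)).
  pose proof (poch_nz a P Ha). pose proof (poch_nz b (n - P) Hb).
  destruct (indf_01 L P n) as [E|[E [HL1 HL2]]]; rewrite E.
  - unfold indf in E. destruct (L <=? P) eqn:E1.
    + destruct (P + L <=? n) eqn:E2; simpl in E; [lra|]. apply Nat.leb_gt in E2.
      rewrite (Bc_gt (n - P) L) by lia. ring.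
    + apply Nat.leb_gt in E1. rewrite (Bc_gt P L) by lia. ring.
  - rewrite !Xf_closed by auto.
    replace (L + (P - L))%nat with P by lia.
    replace (L + (n - P - L))%nat with (n - P)%nat by lia.
    assert (Ew: (w / 4) ^ n = (w / 4) ^ P * (w / 4) ^ (n - P)) by (rewrite <- pow_add; f_equal; lia).
    rewrite Ew.
    field. repeat split; lra.
Qed.

Lemma diag_identity mu nu z n :
  not_nonpos_int (mu + 1) -> not_nonpos_int (nu + 1) -> not_nonpos_int (mu + nu + 1) ->
  sum_f_R0 (fun L => Cf L (mu + 1) (nu + 1) (z / 4) n) n =
  hyp_term (1/2 :: mu/2 + nu/2 + 1/2 :: mu/2 + nu/2 + 1 :: nil)
           (1 :: mu + 1 :: nu + 1 :: mu + nu + 1 :: nil) z n.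
Proof.
  intros Hmu Hnu Hmn.
  pose proof (not_nonpos_shift _ Hmu) as Ha.
  pose proof (not_nonpos_shift _ Hnu) as Hb.
  pose proof (not_nonpos_shift _ Hmn) as Hc.
  unfold Cf. rewrite sf_switch.
  rewrite (sf_ext _ (fun P => (z / 4 / 4) ^ n / (INR (fact P) * poch (mu + 1) P * INR (fact (n - P)) * poch (nu + 1) (n - P))
    * phi (INR (2 * n)) n)) by (intros; apply inner_L; auto).
  rewrite (sf_ext _ (fun P => ((z / 4 / 4) ^ n * phi (INR (2 * n)) n) *
     / (INR (fact P) * poch (mu + 1) P * INR (fact (n - P)) * poch (nu + 1) (n - P))))
    by (intros; unfold Rdiv; ring).
  rewrite sf_scal, bessel_prod by auto.
  rewrite phi_central.
  unfold hyp_term, poch_list. simpl fold_right.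
  pose proof (poch_half n) as E1.
  pose proof (poch_dup (mu/2 + nu/2 + 1/2) n) as E2.
  replace (2 * n)%nat with (n + n)%nat in E2 by lia. rewrite poch_add in E2.
  replace (2 * (mu / 2 + nu / 2 + 1 / 2)) with (mu + nu + 1) in E2 by field.
  replace (mu / 2 + nu / 2 + 1 / 2 + 1 / 2) with (mu / 2 + nu / 2 + 1) in E2 by field.
  replace (mu + 1 + (nu + 1) + INR n - 1) with (mu + nu + 1 + INR n) by ring.
  pose proof (fr_pos n). pose proof (fr_pos (2 * n)).
  pose proof (poch_nz _ n Ha). pose proof (poch_nz _ n Hb). pose proof (poch_nz _ n Hc).
  rewrite poch_one.
  assert (P4: 4 ^ n <> 0) by (apply pow_nonzero; lra).
  assert (Eh: poch (1/2) n = INR (fact (2 * n)) / (4 ^ n * INR (fact n))) by (rewrite <- E1; field; auto; lra).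
  replace (poch (mu / 2 + nu / 2 + 1 / 2) n * (poch (mu / 2 + nu / 2 + 1) n * 1))
    with (poch (mu + nu + 1) n * poch (mu + nu + 1 + INR n) n / 4 ^ n)
    by (rewrite <- E2; field; auto).
  rewrite Eh.
  unfold Rdiv. rewrite !Rpow_mult_distr, <- !Rinv_pow by lra.
  field. repeat split; lra.
Qed.

Lemma nat_above r : exists N : nat, r < INR N.
Proof.
  destruct (Rle_or_lt 0 r) as [H|H].
  - destruct (nfloor_ex r H) as [n [H1 H2]]. exists (S n). rewrite S_INR. lra.
  - exists 0%nat. simpl. lra.
Qed.

Lemma ratio_series (t : nat -> R) N :
  (forall n, (N <= n)%nat -> Rabs (t (S n)) <= / 2 * Rabs (t n)) ->
  ex_series (fun n => Rabs (t n)).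
Proof.
  intros H.
  apply (ex_series_incr_n _ N).
  assert (B: forall m, Rabs (t (N + m)%nat) <= Rabs (t N) * (/ 2) ^ m).
  { induction m as [|m IH].
    - rewrite Nat.add_0_r. simpl. lra.
    - rewrite Nat.add_succ_r. eapply Rle_trans; [apply H; lia|]. simpl.
      pose proof (Rabs_pos (t (N + m)%nat)). nra. }
  apply (@ex_series_le R_AbsRing R_CompleteNormedModule _ (fun m => Rabs (t N) * (/ 2) ^ m)).
  - intros n. change (norm (Rabs (t (N + n)%nat))) with (Rabs (Rabs (t (N + n)%nat))). rewrite Rabs_Rabsolu. apply B.
  - assert (G: ex_series (fun m => (/ 2) ^ m)) by (apply ex_series_geom; rewrite Rabs_pos_eq; lra).
    exact (@ex_series_scal_l R_AbsRing R_NormedModule (Rabs (t N)) _ G).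
Qed.

Lemma key_series c x : (forall j, c + INR j <> 0) -> 0 <= x ->
  ex_series (fun i => INR (S i) * x ^ i / (INR (fact i) * Rabs (poch c i))).
Proof.
  intros Hc Hx.
  set (t := fun i => INR (S i) * x ^ i / (INR (fact i) * Rabs (poch c i))).
  assert (Tpos: forall i, 0 <= t i).
  { intros i. unfold t. pose proof (fr_pos i). pose proof (Rabs_pos (poch c i)).
    apply Rmult_le_pos. apply Rmult_le_pos. apply pos_INR. apply pow_le; auto.
    apply Rlt_le, Rinv_0_lt_compat. apply Rmult_lt_0_compat; auto.
    apply Rabs_pos_lt, poch_nz; auto. }
  apply (ex_series_ext (fun i => Rabs (t i))).
  { intros; apply Rabs_pos_eq, Tpos. }
  destruct (nat_above (2 * Rabs c + 4 * x + 1)) as [N HN].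
  apply (ratio_series t N). intros i Hi.
  rewrite !Rabs_pos_eq by apply Tpos.
  assert (Hy: INR N <= INR i) by (apply le_INR; auto).
  pose proof (Rabs_pos c). set (y := INR i) in *.
  assert (Hcy: y / 2 <= Rabs (c + y)).
  { pose proof (Rabs_triang_inv y (- c)) as T. replace (y - - c) with (c + y) in T by ring.
    rewrite Rabs_Ropp in T. rewrite (Rabs_pos_eq y) in T by (unfold y; apply pos_INR). lra. }
  assert (Ht: t (S i) = t i * ((INR (S (S i)) * x) / (INR (S i) * INR (S i) * Rabs (c + INR i)))).
  { unfold t. rewrite fr_S. simpl poch. rewrite Rabs_mult. simpl pow.
    pose proof (fr_pos i). assert (Rabs (poch c i) <> 0) by (apply Rabs_no_R0, poch_nz; auto).
    assert (Rabs (c + INR i) <> 0) by (apply Rabs_no_R0; auto).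
    assert (INR (S i) <> 0) by (apply not_0_INR; lia).
    field. repeat split; auto; lra. }
  rewrite Ht.
  assert (R1: (INR (S (S i)) * x) / (INR (S i) * INR (S i) * Rabs (c + INR i)) <= / 2).
  { fold y. rewrite !S_INR. fold y.
    assert (Hpos: 0 < (y + 1) * (y + 1) * Rabs (c + y)) by
      (apply Rmult_lt_0_compat; [nra|]; lra).
    apply (Rmult_le_reg_r ((y + 1) * (y + 1) * Rabs (c + y))); auto.
    unfold Rdiv. rewrite Rmult_assoc, Rinv_l by lra. rewrite Rmult_1_r.
    assert (y / 4 >= x) by lra.
    nra. }
  pose proof (Tpos i). nra.
Qed.

Lemma is_series_lim (a : nat -> R) l : is_series a l <-> is_lim_seq (fun N => sum_f_R0 a N) l.
Proof.
  split; intros H.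
  - apply (is_lim_seq_ext (sum_n a)). { intros; apply sum_n_Reals. } exact H.
  - apply (is_lim_seq_ext _ (sum_n a)) in H. { exact H. } intros; symmetry; apply sum_n_Reals.
Qed.

Lemma ex_series_R_le (a b : nat -> R) : (forall n, Rabs (a n) <= b n) -> ex_series b -> ex_series a.
Proof.
  intros H Hb. apply (@ex_series_le R_AbsRing R_CompleteNormedModule _ b); auto.
Qed.

Lemma sf_abs a N : Rabs (sum_f_R0 a N) <= sum_f_R0 (fun i => Rabs (a i)) N.
Proof.
  induction N as [|N IH]; simpl; [lra|].
  eapply Rle_trans; [apply Rabs_triang|]. lra.
Qed.

Lemma sf_le a b N : (forall i, (i <= N)%nat -> a i <= b i) -> sum_f_R0 a N <= sum_f_R0 b N.
Proof.
  intros H. induction N as [|N IH]; simpl.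
  - apply H; lia.
  - apply Rplus_le_compat. apply IH; intros; apply H; lia. apply H; lia.
Qed.

Lemma sf_const c N : sum_f_R0 (fun _ => c) N = INR (S N) * c.
Proof.
  induction N as [|N IH]; simpl sum_f_R0. simpl; ring. rewrite IH, !S_INR. ring.
Qed.

Lemma fubini_tri (c : nat -> nat -> R) (e r : nat -> R) :
  (forall L n, (n < L)%nat -> c L n = 0) ->
  (forall L n, Rabs (c L n) <= e n) ->
  ex_series (fun n => INR (S n) * e n) ->
  (forall L, is_series (c L) (r L)) ->
  is_series r (Series (fun n => sum_f_R0 (fun L => c L n) n)).
Proof.
  intros Hz Hb Hf Hr.
  set (d := fun n => sum_f_R0 (fun L => c L n) n).
  assert (Epos: forall n, 0 <= e n) by (intros n; eapply Rle_trans; [apply Rabs_pos|apply (Hb 0%nat n)]).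
  assert (Hd: ex_series d).
  { apply (ex_series_R_le d (fun n => INR (S n) * e n)); [|exact Hf]. intros n. unfold d.
    eapply Rle_trans; [apply sf_abs|]. rewrite <- sf_const. apply sf_le. intros; apply Hb. }
  assert (He: ex_series e).
  { apply (ex_series_R_le e (fun n => INR (S n) * e n)); [|exact Hf]. intros n. rewrite Rabs_pos_eq by auto.
    rewrite S_INR. pose proof (pos_INR n). pose proof (Epos n). nra. }
  set (f := fun n => INR (S n) * e n).
  assert (PS: forall N, sum_f_R0 d N = sum_f_R0 (fun L => sum_f_R0 (c L) N) N).
  { intros N. unfold d. rewrite <- sf_switch. apply sf_ext. intros n Hn.
    replace (sum_f_R0 (fun L => c L n) N) with (sum_f_R0 (fun L => c L n) (n + (N - n))) by (f_equal; lia).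
    rewrite sf_zero_ext; auto. }
  assert (TB: forall L N, Rabs (r L - sum_f_R0 (c L) N) <= Series (fun k => e (S N + k)%nat)).
  { intros L N.
    assert (Ec: ex_series (c L)) by (exists (r L); auto).
    pose proof (Series_incr_n (c L) (S N) ltac:(lia) Ec) as E. simpl pred in E.
    rewrite (is_series_unique _ _ (Hr L)) in E. rewrite E.
    replace (sum_f_R0 (c L) N + Series (fun k => c L (S N + k)%nat) - sum_f_R0 (c L) N)
      with (Series (fun k => c L (S N + k)%nat)) by ring.
    assert (Ea: ex_series (fun k => Rabs (c L (S N + k)%nat))).
    { apply (ex_series_R_le _ (fun k => e (S N + k)%nat)).
      - intros; rewrite Rabs_Rabsolu; apply Hb.
      - apply (ex_series_incr_n e (S N)); auto. }
    eapply Rle_trans; [apply Series_Rabs; auto|].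
    apply Series_le. intros; split; [apply Rabs_pos|apply Hb].
    apply (ex_series_incr_n e (S N)); auto. }
  set (err := fun N => sum_f_R0 r N - sum_f_R0 d N).
  set (bnd := fun N => Series f - sum_f_R0 f N).
  assert (BB: forall N, Rabs (err N) <= bnd N).
  { intros N. unfold err. rewrite PS, <- minus_sum.
    eapply Rle_trans; [apply sf_abs|].
    eapply Rle_trans; [apply sf_le; intros; apply TB|].
    rewrite sf_const. unfold bnd.
    pose proof (Series_incr_n f (S N) ltac:(lia) Hf) as E. simpl pred in E. rewrite E.
    replace (sum_f_R0 f N + Series (fun k => f (S N + k)%nat) - sum_f_R0 f N)
      with (Series (fun k => f (S N + k)%nat)) by ring.
    assert (Ee: ex_series (fun k => e (S N + k)%nat)) by (apply (ex_series_incr_n e (S N)); auto).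
    rewrite <- Series_scal_l.
    apply Series_le.
    - intros k. split.
      + apply Rmult_le_pos; [apply pos_INR|apply Epos].
      + unfold f. apply Rmult_le_compat_r; [apply Epos|]. apply le_INR; lia.
    - apply (ex_series_incr_n f (S N)); auto. }
  assert (Lb: is_lim_seq bnd 0).
  { unfold bnd. replace 0 with (Series f - Series f) by ring.
    apply is_lim_seq_minus'. apply is_lim_seq_const.
    apply is_series_lim. apply Series_correct; auto. }
  assert (Le: is_lim_seq err 0).
  { apply (is_lim_seq_le_le (fun N => - bnd N) err bnd).
    - intros N. pose proof (BB N). split; [|eapply Rle_trans; [apply Rle_abs|auto]].
      pose proof (Rabs_maj2 (err N)). lra.
    - replace (Finite 0) with (Rbar_opp 0) by (simpl; f_equal; ring). apply -> is_lim_seq_opp. exact Lb.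
    - exact Lb. }
  apply is_series_lim.
  apply (is_lim_seq_ext (fun N => sum_f_R0 d N + err N)).
  { intros N; unfold err; ring. }
  replace (Series d) with (Series d + 0) by ring.
  apply is_lim_seq_plus'; auto.
  apply is_series_lim. apply Series_correct; auto.
Qed.

Lemma poch_mono c d n : 0 < c -> c <= d -> poch c n <= poch d n.
Proof.
  intros Hc Hcd. induction n as [|n IH]; simpl; [lra|].
  pose proof (poch_pos c n Hc). pose proof (pos_INR n).
  apply Rmult_le_compat; auto; lra.
Qed.

Lemma sf_single a N j : (forall i, (i <= N)%nat -> 0 <= a i) -> (j <= N)%nat -> a j <= sum_f_R0 a N.
Proof.
  intros H Hj. induction N as [|N IH].
  - replace j with 0%nat by lia. simpl; lra.
  - simpl. destruct (Nat.eq_dec j (S N)) as [->|Hne].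
    + assert (0 <= sum_f_R0 a N).
      { rewrite <- (sf_zero N). apply sf_le. intros; apply H; lia. }
      lra.
    + pose proof (H (S N) ltac:(lia)). assert (a j <= sum_f_R0 a N) by (apply IH; [intros; apply H; lia|lia]). lra.
Qed.

Lemma hterm_bound L a w i : (forall j, a + INR j <> 0) ->
  Rabs (hterm L a w i) <= INR (S i) * Rabs w ^ i / (INR (fact i) * Rabs (poch (INR L + a) i)).
Proof.
  intros Ha. pose proof (pos_INR L).
  pose proof (poch_pos (INR L + 1/2) i ltac:(lra)) as P1.
  pose proof (poch_mono (INR L + 1/2) (2 * INR L + 1) i ltac:(lra) ltac:(lra)) as P2.
  assert (Hn: poch (INR L + a) i <> 0).
  { apply poch_nz. intros j. replace (INR L + a + INR j) with (a + INR (L + j)) by (rewrite plus_INR; ring). apply Ha. }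
  pose proof (Rabs_pos_lt _ Hn) as Hp.
  pose proof (fr_pos i).
  assert (Eh: hterm L a w i = (poch (INR L + 1/2) i / poch (2 * INR L + 1) i) * (w ^ i / (INR (fact i) * poch (INR L + a) i))).
  { unfold hterm, hyp_term, poch_list. simpl fold_right. field. repeat split; lra. }
  rewrite Eh, Rabs_mult.
  assert (R1: Rabs (poch (INR L + 1 / 2) i / poch (2 * INR L + 1) i) <= 1).
  { rewrite Rabs_pos_eq. 2:{ apply Rlt_le, Rdiv_lt_0_compat; lra. }
    apply (Rmult_le_reg_r (poch (2 * INR L + 1) i)); [lra|].
    unfold Rdiv. rewrite Rmult_assoc, Rinv_l by lra. lra. }
  assert (R2: Rabs (w ^ i / (INR (fact i) * poch (INR L + a) i)) = Rabs w ^ i / (INR (fact i) * Rabs (poch (INR L + a) i))).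
  { unfold Rdiv. rewrite Rabs_mult, Rabs_inv, Rabs_mult, <- RPow_abs.
    rewrite (Rabs_pos_eq (INR (fact i))) by lra. reflexivity. }
  rewrite R2.
  assert (0 <= Rabs w ^ i / (INR (fact i) * Rabs (poch (INR L + a) i))).
  { apply Rmult_le_pos. apply pow_le, Rabs_pos. apply Rlt_le, Rinv_0_lt_compat, Rmult_lt_0_compat; lra. }
  assert (R3: 1 <= INR (S i)) by (rewrite S_INR; pose proof (pos_INR i); lra).
  replace (INR (S i) * Rabs w ^ i / (INR (fact i) * Rabs (poch (INR L + a) i)))
    with (INR (S i) * (Rabs w ^ i / (INR (fact i) * Rabs (poch (INR L + a) i)))) by (unfold Rdiv; ring).
  pose proof (Rabs_pos (poch (INR L + 1 / 2) i / poch (2 * INR L + 1) i)).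
  nra.
Qed.


Lemma hterm_abs L a w : (forall j, a + INR j <> 0) -> ex_series (fun i => Rabs (hterm L a w i)).
Proof.
  intros Ha. eapply ex_series_R_le; [|apply (key_series (INR L + a) (Rabs w))].
  - intros i. rewrite Rabs_Rabsolu. apply hterm_bound; auto.
  - intros j. replace (INR L + a + INR j) with (a + INR (L + j)) by (rewrite plus_INR; ring). apply Ha.
  - apply Rabs_pos.
Qed.

Lemma is_series_cons0 (b : nat -> R) l : b 0%nat = 0 -> is_series (fun k => b (S k)) l -> is_series b l.
Proof.
  intros H0 H. apply is_series_decr_1.
  change (is_series (fun k => b (S k)) (l - b 0%nat)). rewrite H0, Rminus_0_r. exact H.
Qed.

Lemma is_series_shift (a : nat -> R) l m :
  is_series a l -> is_series (fun n => if (m <=? n)%nat then a (n - m)%nat else 0) l.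
Proof.
  intros H. induction m as [|m IH].
  - eapply is_series_ext; [|exact H]. intros n. simpl. f_equal. lia.
  - apply is_series_cons0; [reflexivity|].
    eapply is_series_ext; [|exact IH]. intros n. simpl. reflexivity.
Qed.

Definition Kc (L : nat) (a b w : R) : R :=
  delta2 L * (w ^ L / (4 ^ L * INR (fact L) * poch a L)) * (w ^ L / (4 ^ L * INR (fact L) * poch b L)).

Lemma row_series L a b w : (forall j, a + INR j <> 0) -> (forall j, b + INR j <> 0) ->
  is_series (Cf L a b w) (Kc L a b w * (Series (hterm L a w) * Series (hterm L b w))).
Proof.
  intros Ha Hb.
  pose proof (hterm_abs L a w Ha) as A1. pose proof (hterm_abs L b w Hb) as B1.
  assert (A2 := Series_correct _ (ex_series_Rabs _ A1)).
  assert (B2 := Series_correct _ (ex_series_Rabs _ B1)).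
  pose proof (is_series_mult _ _ _ _ A2 B2 A1 B1) as M.
  pose proof (@is_series_scal_l R_AbsRing R_NormedModule (Kc L a b w) _ _ M) as M2.
  pose proof (is_series_shift _ _ (2 * L) M2) as M3.
  eapply is_series_ext; [|exact M3]. intros n. cbv beta.
  destruct (2 * L <=? n)%nat eqn:E.
  - apply Nat.leb_le in E. unfold Cf.
    rewrite <- (reindex (fun P => delta2 L * Xf L a w (P - L) * Xf L b w (n - P - L))) by auto.
    change (scal (Kc L a b w) (sum_f_R0 (fun k => hterm L a w k * hterm L b w (n - 2 * L - k)) (n - 2 * L)))
      with (Kc L a b w * sum_f_R0 (fun k => hterm L a w k * hterm L b w (n - 2 * L - k)) (n - 2 * L)).
    rewrite <- sf_scal. apply sf_ext. intros i Hi.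
    replace (L + i - L)%nat with i by lia.
    replace (n - (L + i) - L)%nat with (n - 2 * L - i)%nat by lia.
    unfold Kc, Xf. ring.
  - apply Nat.leb_gt in E. unfold Cf. rewrite reindex_zero by auto. reflexivity.
Qed.

Lemma term_closed (a b w : R) (n P L : nat) : (forall j, a + INR j <> 0) -> (forall j, b + INR j <> 0) -> (P <= n)%nat ->
  indf L P n * (delta2 L * Xf L a w (P - L) * Xf L b w (n - P - L))
  = (w / 4) ^ n / (INR (fact P) * poch a P * INR (fact (n - P)) * poch b (n - P))
    * (delta2 L * Bc P L * Bc (n - P) L).
Proof.
  intros Ha Hb HP.
  pose proof (fr_pos P). pose proof (fr_pos (n - P)).
  pose proof (poch_nz a P Ha). pose proof (poch_nz b (n - P) Hb).
  destruct (indf_01 L P n) as [E|[E [HL1 HL2]]]; rewrite E.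
  - unfold indf in E. destruct (L <=? P) eqn:E1.
    + destruct (P + L <=? n) eqn:E2; simpl in E; [lra|]. apply Nat.leb_gt in E2.
      rewrite (Bc_gt (n - P) L) by lia. ring.
    + apply Nat.leb_gt in E1. rewrite (Bc_gt P L) by lia. ring.
  - rewrite !Xf_closed by auto.
    replace (L + (P - L))%nat with P by lia.
    replace (L + (n - P - L))%nat with (n - P)%nat by lia.
    assert (Ew: (w / 4) ^ n = (w / 4) ^ P * (w / 4) ^ (n - P)) by (rewrite <- pow_add; f_equal; lia).
    rewrite Ew.
    field. repeat split; lra.
Qed.

Definition gq (a w : R) (P : nat) : R := Rabs w ^ P / (INR (fact P) * Rabs (poch a P)).

Definition ebound (a b w : R) (n : nat) : R := sum_f_R0 (fun P => gq a w P * gq b w (n - P)) n.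

Lemma gq_nonneg a w P : (forall j, a + INR j <> 0) -> 0 <= gq a w P.
Proof.
  intros Ha. unfold gq. pose proof (fr_pos P). pose proof (Rabs_pos_lt _ (poch_nz a P Ha)).
  apply Rmult_le_pos. apply pow_le, Rabs_pos. apply Rlt_le, Rinv_0_lt_compat, Rmult_lt_0_compat; lra.
Qed.

Lemma phi_central_le n : phi (INR (2 * n)) n <= 4 ^ n.
Proof.
  rewrite phi_central, <- poch_half.
  pose proof (poch_mono (1/2) 1 n ltac:(lra) ltac:(lra)) as M. rewrite poch_one in M.
  pose proof (fr_pos n). pose proof (pow_lt 4 n ltac:(lra)).
  assert (E: poch (1/2) n * 4 ^ n * INR (fact n) / (INR (fact n) * INR (fact n)) = 4 ^ n * (poch (1/2) n / INR (fact n)))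
    by (field; lra).
  rewrite E.
  assert (poch (1/2) n / INR (fact n) <= 1).
  { apply (Rmult_le_reg_r (INR (fact n))); auto. unfold Rdiv. rewrite Rmult_assoc, Rinv_l by lra. lra. }
  nra.
Qed.

Lemma delta2_pos L : 0 < delta2 L.
Proof. unfold delta2; destruct L; simpl; lra. Qed.

Lemma Cf_bound L a b w n : (forall j, a + INR j <> 0) -> (forall j, b + INR j <> 0) ->
  Rabs (Cf L a b w n) <= ebound a b w n.
Proof.
  intros Ha Hb. unfold Cf, ebound.
  eapply Rle_trans; [apply sf_abs|]. apply sf_le. intros P HP.
  rewrite term_closed by auto.
  pose proof (fr_pos P). pose proof (fr_pos (n - P)).
  pose proof (Rabs_pos_lt _ (poch_nz a P Ha)). pose proof (Rabs_pos_lt _ (poch_nz b (n - P) Hb)).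
  assert (Hs: 0 <= delta2 L * Bc P L * Bc (n - P) L).
  { pose proof (delta2_pos L). pose proof (Bc_nonneg P L). pose proof (Bc_nonneg (n - P) L).
    apply Rmult_le_pos; [apply Rmult_le_pos|]; lra. }
  assert (Hv: delta2 L * Bc P L * Bc (n - P) L <= 4 ^ n).
  { eapply Rle_trans; [|apply phi_central_le].
    pose proof (V_identity P (n - P)) as V. replace (n - P + P)%nat with n in V by lia.
    rewrite <- V. destruct (le_lt_dec L n) as [HL|HL].
    - apply (sf_single (fun L => delta2 L * Bc P L * Bc (n - P) L)); auto.
      intros i _. pose proof (delta2_pos i). pose proof (Bc_nonneg P i). pose proof (Bc_nonneg (n - P) i).
      apply Rmult_le_pos; [apply Rmult_le_pos|]; lra.
    - rewrite (Bc_gt P L) by lia. rewrite Rmult_0_r, Rmult_0_l.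
      rewrite <- (sf_zero n). apply sf_le. intros i _.
      pose proof (delta2_pos i). pose proof (Bc_nonneg P i). pose proof (Bc_nonneg (n - P) i).
      apply Rmult_le_pos; [apply Rmult_le_pos|]; lra. }
  rewrite Rabs_mult, (Rabs_pos_eq (delta2 L * _ * _)) by auto.
  unfold Rdiv. rewrite Rabs_mult, Rabs_inv, <- RPow_abs, !Rabs_mult.
  rewrite (Rabs_pos_eq (INR (fact P))), (Rabs_pos_eq (INR (fact (n - P)))) by lra.
  unfold gq. rewrite Rabs_inv, (Rabs_pos_eq 4) by lra.
  assert (Ew: Rabs w ^ n = Rabs w ^ P * Rabs w ^ (n - P)) by (rewrite <- pow_add; f_equal; lia).
  rewrite Rpow_mult_distr, <- Rinv_pow by lra.
  set (D := INR (fact P) * Rabs (poch a P) * INR (fact (n - P)) * Rabs (poch b (n - P))).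
  assert (HD: 0 < D) by (unfold D; repeat apply Rmult_lt_0_compat; lra).
  pose proof (pow_lt 4 n ltac:(lra)) as H4.
  assert (0 <= Rabs w ^ n) by (apply pow_le, Rabs_pos).
  assert (0 <= Rabs w ^ n * / D) by (apply Rmult_le_pos; [lra|apply Rlt_le, Rinv_0_lt_compat; lra]).
  assert (X1: (delta2 L * Bc P L * Bc (n - P) L) / 4 ^ n <= 1).
  { apply (Rmult_le_reg_r (4 ^ n)); auto. unfold Rdiv. rewrite Rmult_assoc, Rinv_l by lra. lra. }
  replace (Rabs w ^ P / (INR (fact P) * Rabs (poch a P)) *
    (Rabs w ^ (n - P) / (INR (fact (n - P)) * Rabs (poch b (n - P))))) with (Rabs w ^ n * / D)
    by (rewrite Ew; unfold D; field; repeat split; lra).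
  replace (Rabs w ^ n * / 4 ^ n * / D * (delta2 L * Bc P L * Bc (n - P) L))
    with ((Rabs w ^ n * / D) * ((delta2 L * Bc P L * Bc (n - P) L) / 4 ^ n)) by (field; lra).
  nra.
Qed.

Lemma ex_series_extR (a b : nat -> R) : (forall n, a n = b n) -> ex_series a -> ex_series b.
Proof. apply ex_series_ext. Qed.

Lemma ebound_series a b w : (forall j, a + INR j <> 0) -> (forall j, b + INR j <> 0) ->
  ex_series (fun n => INR (S n) * ebound a b w n).
Proof.
  intros Ha Hb.
  set (u := fun P => INR (S P) * gq a w P).
  set (v := fun P => INR (S P) * gq b w P).
  assert (U: ex_series u).
  { apply (ex_series_extR (fun i => INR (S i) * Rabs w ^ i / (INR (fact i) * Rabs (poch a i)))).
    intros; unfold u, gq, Rdiv; ring. apply (key_series a (Rabs w) Ha (Rabs_pos w)). }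
  assert (V: ex_series v).
  { apply (ex_series_extR (fun i => INR (S i) * Rabs w ^ i / (INR (fact i) * Rabs (poch b i)))).
    intros; unfold v, gq, Rdiv; ring. apply (key_series b (Rabs w) Hb (Rabs_pos w)). }
  assert (Up: forall P, 0 <= u P) by (intros; unfold u; apply Rmult_le_pos; [apply pos_INR|apply gq_nonneg; auto]).
  assert (Vp: forall P, 0 <= v P) by (intros; unfold v; apply Rmult_le_pos; [apply pos_INR|apply gq_nonneg; auto]).
  assert (Ua: ex_series (fun P => Rabs (u P))) by (apply (ex_series_extR u); [intros; rewrite Rabs_pos_eq; auto|exact U]).
  assert (Va: ex_series (fun P => Rabs (v P))) by (apply (ex_series_extR v); [intros; rewrite Rabs_pos_eq; auto|exact V]).
  pose proof (is_series_mult u v _ _ (Series_correct _ U) (Series_correct _ V) Ua Va) as M.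
  apply (ex_series_R_le _ (fun n => sum_f_R0 (fun k => u k * v (n - k)%nat) n)).
  2:{ eexists; exact M. }
  intros n. unfold ebound.
  assert (0 <= sum_f_R0 (fun P => gq a w P * gq b w (n - P)) n).
  { rewrite <- (sf_zero n). apply sf_le. intros. apply Rmult_le_pos; apply gq_nonneg; auto. }
  rewrite Rabs_pos_eq by (apply Rmult_le_pos; [apply pos_INR|auto]).
  rewrite <- sf_scal. apply sf_le. intros P HP. unfold u, v.
  pose proof (gq_nonneg a w P Ha). pose proof (gq_nonneg b w (n - P) Hb).
  assert (INR (S n) <= INR (S P) * INR (S (n - P))).
  { rewrite <- mult_INR. apply le_INR. nia. }
  assert (0 <= gq a w P * gq b w (n - P)) by (apply Rmult_le_pos; auto).
  replace (INR (S P) * gq a w P * (INR (S (n - P)) * gq b w (n - P)))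
    with ((INR (S P) * INR (S (n - P))) * (gq a w P * gq b w (n - P))) by ring.
  apply Rmult_le_compat_r; auto.
Qed.

Lemma lim_inv_n : is_lim_seq (fun n => / INR n) 0.
Proof.
  replace (Finite 0) with (Rbar_inv p_infty) by reflexivity.
  apply is_lim_seq_inv; [apply is_lim_seq_INR|discriminate].
Qed.

Lemma lim_ratio1 c : is_lim_seq (fun n => (INR n + c) / INR n) 1.
Proof.
  apply (is_lim_seq_ext_loc (fun n => 1 + c * / INR n)).
  - exists 1%nat. intros n Hn. assert (0 < INR n) by (apply lt_0_INR; lia). field. lra.
  - assert (Ht: is_lim_seq (fun n => 1 + c * / INR n) (1 + c * 0)).
    { apply is_lim_seq_plus'; [apply is_lim_seq_const|].
      apply is_lim_seq_mult'; [apply is_lim_seq_const|apply lim_inv_n]. }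
    replace (1 + c * 0) with 1 in Ht by ring. exact Ht.
Qed.

Lemma lim_ratio2 c : is_lim_seq (fun n => INR n / (INR n + c)) 1.
Proof.
  destruct (nat_above (Rabs c)) as [N HN].
  apply (is_lim_seq_ext_loc (fun n => 1 / ((INR n + c) / INR n))).
  - exists (S N). intros n Hn. assert (INR N < INR n) by (apply lt_INR; lia).
    pose proof (pos_INR N). pose proof (Rabs_pos c). pose proof (Rle_abs (- c)). rewrite Rabs_Ropp in *.
    field. split; lra.
  - replace (Finite 1) with (Finite (1 / 1)) by (f_equal; field).
    apply is_lim_seq_div'; [apply is_lim_seq_const|apply lim_ratio1|lra].
Qed.

Definition gs (x : R) (n : nat) : R := INR (fact n) * Rpower (INR n) x / poch x (S n).

Lemma Gamma_lim (x l : R) : is_lim_seq (gs x) l -> Gamma x = l.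
Proof. intros H. unfold Gamma. change (real (Lim_seq (gs x)) = l). rewrite (is_lim_seq_unique _ _ H). reflexivity. Qed.

Lemma gs_step x n : (forall j, x + INR j <> 0) -> (0 < n)%nat ->
  gs (x + 1) n = gs x n * (x * (INR n / (INR n + (x + 1)))).
Proof.
  intros Hx Hn. unfold gs.
  assert (0 < INR n) by (apply lt_0_INR; lia).
  rewrite Rpower_plus, Rpower_1 by auto.
  pose proof (poch_S_front x (S n)) as E. rewrite poch_S in E.
  assert (Hp: poch x (S n) <> 0) by (apply poch_nz; auto).
  assert (Hq: x + INR (S n) <> 0) by auto.
  assert (Hp1: poch (x + 1) (S n) <> 0).
  { apply poch_nz. intros j. replace (x + 1 + INR j) with (x + INR (S j)) by (rewrite S_INR; ring). auto. }
  assert (Hx0: x <> 0) by (pose proof (Hx 0%nat); simpl in *; lra).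
  assert (E2: poch (x + 1) (S n) = poch x (S n) * (x + INR (S n)) / x) by (rewrite E; field; auto).
  rewrite E2. rewrite S_INR in *.
  assert (INR n + (x + 1) <> 0) by (intro; apply Hq; lra).
  field. repeat split; auto.
Qed.

Lemma GP_up (x l : R) : (forall j, x + INR j <> 0) -> is_lim_seq (gs x) l ->
  is_lim_seq (gs (x + 1)) (l * x).
Proof.
  intros Hx H.
  apply (is_lim_seq_ext_loc (fun n => gs x n * (x * (INR n / (INR n + (x + 1)))))).
  - exists 1%nat. intros n Hn. symmetry. apply gs_step; auto.
  - apply is_lim_seq_mult'; auto.
    assert (Ht: is_lim_seq (fun n => x * (INR n / (INR n + (x + 1)))) (x * 1))
      by (apply is_lim_seq_mult'; [apply is_lim_seq_const|apply lim_ratio2]).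
    replace (x * 1) with x in Ht by ring. exact Ht.
Qed.

Lemma GP_down (x l : R) : (forall j, x + INR j <> 0) -> is_lim_seq (gs (x + 1)) l ->
  is_lim_seq (gs x) (l / x).
Proof.
  intros Hx H.
  assert (Hx0: x <> 0) by (pose proof (Hx 0%nat); simpl in *; lra).
  apply (is_lim_seq_ext_loc (fun n => gs (x + 1) n * (/ x * ((INR n + (x + 1)) / INR n)))).
  - exists 1%nat. intros n Hn. rewrite gs_step by (auto; lia).
    assert (0 < INR n) by (apply lt_0_INR; lia).
    assert (INR n + (x + 1) <> 0).
    { replace (INR n + (x + 1)) with (x + INR (S n)) by (rewrite S_INR; ring). auto. }
    field. repeat split; auto; lra.
  - replace (l / x) with (l * (/ x * 1)) by (field; auto).
    apply is_lim_seq_mult'; auto.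
    apply is_lim_seq_mult'; [apply is_lim_seq_const|apply lim_ratio1].
Qed.

Lemma exp_le_mono x y : x <= y -> exp x <= exp y.
Proof. intros H. destruct (Req_dec x y) as [->|Hn]; [lra|]. apply Rlt_le, exp_increasing. lra. Qed.

Lemma ln_le_sub1 z : 0 < z -> ln z <= z - 1.
Proof.
  intros Hz. pose proof (exp_ineq1_le (z - 1)).
  rewrite <- (ln_exp (z - 1)). apply ln_le; auto. lra.
Qed.

Lemma concave_ln y b : 0 <= y <= 1 -> 0 < b -> y * ln b <= ln (1 + y * (b - 1)).
Proof.
  intros Hy Hb. set (c := 1 + y * (b - 1)).
  assert (Hc: 0 < c) by (unfold c; nra).
  pose proof (ln_le_sub1 (b / c) ltac:(apply Rdiv_lt_0_compat; auto)) as E1.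
  pose proof (ln_le_sub1 (1 / c) ltac:(apply Rdiv_lt_0_compat; lra)) as E2.
  rewrite ln_div in E1, E2 by lra. rewrite ln_1 in E2.
  assert (E3: y * (b / c - 1) + (1 - y) * (1 / c - 1) = 0) by (unfold c in *; field; lra).
  assert (y * (ln b - ln c) <= y * (b / c - 1)) by (apply Rmult_le_compat_l; lra).
  assert ((1 - y) * (0 - ln c) <= (1 - y) * (1 / c - 1)) by (apply Rmult_le_compat_l; lra).
  lra.
Qed.

Definition tn (y : R) (n : nat) : R := exp (y * (ln (INR (S n)) - ln (INR n))).

Lemma tn_lower (y : R) (Hy : 0 < y <= 1) n : (0 < n)%nat -> 1 + y / INR (S n) <= tn y n.
Proof.
  intros Hn. unfold tn. assert (0 < INR n) by (apply lt_0_INR; lia).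
  rewrite S_INR in *.
  eapply Rle_trans; [|apply exp_ineq1_le]. apply Rplus_le_compat_l.
  pose proof (ln_le_sub1 (INR n / (INR n + 1)) ltac:(apply Rdiv_lt_0_compat; lra)) as E.
  rewrite ln_div in E by lra.
  replace (INR n / (INR n + 1) - 1) with (- (1 / (INR n + 1))) in E by (field; lra).
  unfold Rdiv. rewrite <- (Rmult_1_r y) at 1. rewrite Rmult_assoc. apply Rmult_le_compat_l; lra.
Qed.

Lemma tn_upper (y : R) (Hy : 0 < y <= 1) n : (0 < n)%nat -> tn y n <= 1 + y / INR n.
Proof.
  intros Hn. unfold tn. assert (0 < INR n) by (apply lt_0_INR; lia).
  pose proof (concave_ln y (INR (S n) / INR n) ltac:(lra) ltac:(apply Rdiv_lt_0_compat; [apply lt_0_INR; lia|lra])) as E.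
  rewrite ln_div in E by (try apply lt_0_INR; lia || lra).
  replace (1 + y * (INR (S n) / INR n - 1)) with (1 + y / INR n) in E by (rewrite S_INR; field; lra).
  rewrite <- (exp_ln (1 + y / INR n)). apply exp_le_mono; auto.
  assert (0 < y / INR n) by (apply Rdiv_lt_0_compat; lra). lra.
Qed.

Lemma gs_pos (y : R) (Hy : 0 < y <= 1) n : 0 < gs y n.
Proof.
  unfold gs. apply Rdiv_lt_0_compat.
  - apply Rmult_lt_0_compat; [apply fr_pos|apply exp_pos].
  - apply poch_pos; lra.
Qed.

Lemma gs_S (y : R) (Hy : 0 < y <= 1) n : gs y (S n) = gs y n * (INR (S n) * tn y n / (y + INR (S n))).
Proof.
  unfold gs, tn. rewrite fr_S, (poch_S y (S n)).
  assert (Rpower (INR (S n)) y = Rpower (INR n) y * exp (y * (ln (INR (S n)) - ln (INR n)))).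
  { unfold Rpower. rewrite <- exp_plus. f_equal. ring. }
  rewrite H.
  pose proof (poch_pos y (S n) ltac:(lra)). pose proof (pos_INR (S n)).
  field. lra.
Qed.

Definition qn (y : R) (n : nat) : R := gs y n * ((INR n + y) / INR n).

Lemma gs_incr (y : R) (Hy : 0 < y <= 1) n : (0 < n)%nat -> gs y n <= gs y (S n).
Proof.
  intros Hn. rewrite (gs_S y Hy). pose proof (gs_pos y Hy n). pose proof (tn_lower y Hy n Hn).
  assert (0 < INR (S n)) by (apply lt_0_INR; lia).
  assert (1 <= INR (S n) * tn y n / (y + INR (S n))).
  { apply (Rmult_le_reg_r (y + INR (S n))); [lra|].
    unfold Rdiv. rewrite Rmult_assoc, Rinv_l by lra. rewrite Rmult_1_l, Rmult_1_r.
    replace (y + INR (S n)) with (INR (S n) * (1 + y / INR (S n))) by (field; lra).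
    apply Rmult_le_compat_l; lra. }
  nra.
Qed.

Lemma qn_decr (y : R) (Hy : 0 < y <= 1) n : (0 < n)%nat -> qn y (S n) <= qn y n.
Proof.
  intros Hn. unfold qn. rewrite (gs_S y Hy). pose proof (gs_pos y Hy n). pose proof (tn_upper y Hy n Hn).
  assert (0 < INR n) by (apply lt_0_INR; lia).
  replace (gs y n * (INR (S n) * tn y n / (y + INR (S n))) * ((INR (S n) + y) / INR (S n)))
    with (gs y n * tn y n) by (rewrite S_INR; field; lra).
  replace ((INR n + y) / INR n) with (1 + y / INR n) by (field; lra).
  apply Rmult_le_compat_l; lra.
Qed.

Lemma gs_le_q (y : R) (Hy : 0 < y <= 1) n : (0 < n)%nat -> gs y n <= qn y n.
Proof.
  intros Hn. unfold qn. pose proof (gs_pos y Hy n). assert (0 < INR n) by (apply lt_0_INR; lia).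
  replace ((INR n + y) / INR n) with (1 + y / INR n) by (field; lra).
  assert (0 < y / INR n) by (apply Rdiv_lt_0_compat; lra). nra.
Qed.

Lemma base_GP (y : R) (Hy : 0 < y <= 1) : exists l, 0 < l /\ is_lim_seq (gs y) l.
Proof.
  set (s := fun n => gs y (S n)).
  assert (Inc: forall n, s n <= s (S n)) by (intros; unfold s; apply (gs_incr y Hy); lia).
  assert (Qd: forall n, qn y (S n) <= qn y 1).
  { induction n as [|n IH]; [lra|]. eapply Rle_trans; [apply (qn_decr y Hy); lia|auto]. }
  assert (Bd: forall n, s n <= qn y 1) by (intros; unfold s; eapply Rle_trans; [apply (gs_le_q y Hy); lia|apply Qd]).
  destruct (ex_finite_lim_seq_incr s (qn y 1) Inc Bd) as [l Hl].
  assert (Ge: forall n, s 0%nat <= s n).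
  { induction n as [|n IH]; [lra|]. eapply Rle_trans; [apply IH|apply Inc]. }
  pose proof (is_lim_seq_le (fun _ => s 0%nat) s (s 0%nat) l Ge (is_lim_seq_const _) Hl) as Le.
  simpl in Le. exists l. split.
  - pose proof (gs_pos y Hy 1). unfold s in Le. lra.
  - apply is_lim_seq_incr_1. exact Hl.
Qed.


Lemma no_int_between p q : 0 < INR p - INR q < 1 -> False.
Proof.
  intros [H1 H2]. destruct (le_lt_dec p q) as [Hpq|Hpq].
  - apply le_INR in Hpq. lra.
  - rewrite <- minus_INR in H1, H2 by lia.
    assert (1 <= INR (p - q)) by (replace 1 with (INR 1) by reflexivity; apply le_INR; lia). lra.
Qed.

Lemma GP_upm m y : 0 < y <= 1 -> exists l, l <> 0 /\ is_lim_seq (gs (y + INR m)) l.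
Proof.
  intros Hy. induction m as [|m IH].
  - destruct (base_GP y Hy) as [l [Hl1 Hl2]]. exists l. split; [lra|]. simpl. rewrite Rplus_0_r. auto.
  - destruct IH as [l [Hl1 Hl2]]. exists (l * (y + INR m)).
    pose proof (pos_INR m).
    split. { apply Rmult_integral_contrapositive; split; lra. }
    replace (y + INR (S m)) with (y + INR m + 1) by (rewrite S_INR; ring).
    apply GP_up; auto. intros j. pose proof (pos_INR j). lra.
Qed.

Lemma GP_downm m y : 0 < y < 1 -> exists l, l <> 0 /\ is_lim_seq (gs (y - INR m)) l.
Proof.
  intros Hy. induction m as [|m IH].
  - destruct (base_GP y ltac:(lra)) as [l [Hl1 Hl2]]. exists l. split; [lra|]. simpl. rewrite Rminus_0_r. auto.
  - destruct IH as [l [Hl1 Hl2]].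
    set (x := y - INR (S m)).
    assert (Hx: forall j, x + INR j <> 0).
    { intros j E. unfold x in E. apply (no_int_between (S m) j). lra. }
    assert (Hx0: x <> 0) by (pose proof (Hx 0%nat); simpl in *; lra).
    exists (l / x). split. { unfold Rdiv. apply Rmult_integral_contrapositive; split; auto. apply Rinv_neq_0_compat; auto. }
    apply GP_down; auto. unfold x. replace (y - INR (S m) + 1) with (y - INR m) by (rewrite S_INR; ring). auto.
Qed.

Lemma GP_exists x : not_nonpos_int x -> exists l, l <> 0 /\ is_lim_seq (gs x) l.
Proof.
  intros Hx. destruct (Rlt_or_le 0 x) as [Hp|Hn].
  - destruct (nfloor1_ex x Hp) as [n [H1 H2]].
    destruct (GP_upm n (x - INR n) ltac:(lra)) as [l Hl].
    replace (x - INR n + INR n) with x in Hl by ring. eauto.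
  - destruct (nfloor_ex (- x) ltac:(lra)) as [n [H1 H2]].
    assert (Hy1: x + INR n + 1 <> 1) by (intro E; apply (Hx n); lra).
    destruct (GP_downm (S n) (x + INR n + 1) ltac:(lra)) as [l Hl].
    replace (x + INR n + 1 - INR (S n)) with x in Hl by (rewrite S_INR; ring). eauto.
Qed.

Lemma Gamma_nz x : not_nonpos_int x -> Gamma x <> 0.
Proof.
  intros Hx. destruct (GP_exists x Hx) as [l [Hl1 Hl2]]. rewrite (Gamma_lim x l Hl2). auto.
Qed.

Lemma Gamma_succ x : not_nonpos_int x -> Gamma (x + 1) = x * Gamma x.
Proof.
  intros Hx. destruct (GP_exists x Hx) as [l [Hl1 Hl2]].
  pose proof (GP_up x l (not_nonpos_shift x Hx) Hl2) as U.
  rewrite (Gamma_lim _ _ U), (Gamma_lim _ _ Hl2). ring.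
Qed.

Lemma Gamma_poch x L : not_nonpos_int x -> Gamma (x + INR L) = poch x L * Gamma x.
Proof.
  intros Hx. induction L as [|L IH].
  - simpl. rewrite Rplus_0_r. ring.
  - replace (x + INR (S L)) with ((x + INR L) + 1) by (rewrite S_INR; ring).
    rewrite Gamma_succ by (apply not_nonpos_add; auto). rewrite IH. simpl. ring.
Qed.

Lemma Rpower_combine mu nu L :
  Rpower 2 (mu + nu) * Rpower 2 (- 8 * INR L - mu - nu) = / (16 ^ L * 16 ^ L).
Proof.
  replace (- 8 * INR L - mu - nu) with (- INR (8 * L) + - (mu + nu)) by (rewrite mult_INR; simpl; ring).
  rewrite (Rpower_plus (- INR (8 * L))), !Rpower_Ropp, Rpower_pow by lra.
  assert (0 < Rpower 2 (mu + nu)) by apply exp_pos.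
  replace (2 ^ (8 * L)) with (16 ^ L * 16 ^ L).
  - assert (16 ^ L <> 0) by (apply pow_nonzero; lra). assert (2 ^ (8 * L) <> 0) by (apply pow_nonzero; lra). field. repeat split; auto; lra.
  - rewrite <- Rpow_mult_distr, pow_mult. f_equal. ring.
Qed.

Lemma row_value k mu nu L :
  not_nonpos_int (mu + 1) -> not_nonpos_int (nu + 1) ->
  Rpower 2 (mu + nu) * Gamma (mu + 1) * Gamma (nu + 1) *
       ((-1) ^ (2 * L) * k ^ (4 * L) * Rpower 2 (- 8 * INR L - mu - nu)
          * (2 - delta0 L)
        / ((INR (fact L)) ^ 2 * Gamma (INR L + mu + 1) * Gamma (INR L + nu + 1))
        * hypergeom (INR L + 1/2 :: nil) (2 * INR L + 1 :: INR L + mu + 1 :: nil) (- k ^ 2 / 4)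
        * hypergeom (INR L + 1/2 :: nil) (2 * INR L + 1 :: INR L + nu + 1 :: nil) (- k ^ 2 / 4))
  = Kc L (mu + 1) (nu + 1) (- k ^ 2 / 4) *
    (Series (hterm L (mu + 1) (- k ^ 2 / 4)) * Series (hterm L (nu + 1) (- k ^ 2 / 4))).
Proof.
  intros Hmu Hnu.
  assert (G1: Gamma (INR L + mu + 1) = poch (mu + 1) L * Gamma (mu + 1))
    by (replace (INR L + mu + 1) with ((mu + 1) + INR L) by ring; apply Gamma_poch; auto).
  assert (G2: Gamma (INR L + nu + 1) = poch (nu + 1) L * Gamma (nu + 1))
    by (replace (INR L + nu + 1) with ((nu + 1) + INR L) by ring; apply Gamma_poch; auto).
  assert (HA: hypergeom (INR L + 1/2 :: nil) (2 * INR L + 1 :: INR L + mu + 1 :: nil) (- k ^ 2 / 4)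
     = Series (hterm L (mu + 1) (- k ^ 2 / 4))).
  { unfold hypergeom. apply Series_ext. intros i. unfold hterm.
    replace (INR L + mu + 1) with (INR L + (mu + 1)) by ring. reflexivity. }
  assert (HB: hypergeom (INR L + 1/2 :: nil) (2 * INR L + 1 :: INR L + nu + 1 :: nil) (- k ^ 2 / 4)
     = Series (hterm L (nu + 1) (- k ^ 2 / 4))).
  { unfold hypergeom. apply Series_ext. intros i. unfold hterm.
    replace (INR L + nu + 1) with (INR L + (nu + 1)) by ring. reflexivity. }
  rewrite HA, HB, G1, G2.
  set (Sa := Series (hterm L (mu + 1) (- k ^ 2 / 4))).
  set (Sb := Series (hterm L (nu + 1) (- k ^ 2 / 4))).
  set (w := - k ^ 2 / 4).
  pose proof (Rpower_combine mu nu L) as RC.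
  assert (Rp: 0 < Rpower 2 (mu + nu)) by apply exp_pos.
  assert (H16: 16 ^ L <> 0) by (apply pow_nonzero; lra).
  assert (E8: Rpower 2 (- 8 * INR L - mu - nu) = / (16 ^ L * 16 ^ L) / Rpower 2 (mu + nu))
    by (rewrite <- RC; field; lra).
  rewrite E8.
  rewrite pow_mult. replace ((-1) ^ 2) with 1 by ring. rewrite pow1.
  rewrite pow_mult.
  assert (Wk: w ^ L * w ^ L = (k ^ 4) ^ L / 16 ^ L).
  { rewrite <- Rpow_mult_distr. unfold w.
    replace (- k ^ 2 / 4 * (- k ^ 2 / 4)) with (k ^ 4 * / 16) by field.
    rewrite Rpow_mult_distr, pow_inv. reflexivity. }
  assert (F4: 4 ^ L * 4 ^ L = 16 ^ L) by (rewrite <- Rpow_mult_distr; f_equal; ring).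
  pose proof (Gamma_nz _ Hmu). pose proof (Gamma_nz _ Hnu).
  pose proof (poch_nz _ L (not_nonpos_shift _ Hmu)). pose proof (poch_nz _ L (not_nonpos_shift _ Hnu)).
  pose proof (fr_pos L).
  unfold Kc, delta2.
  replace ((2 - delta0 L) * (w ^ L / (4 ^ L * INR (fact L) * poch (mu + 1) L)) *
     (w ^ L / (4 ^ L * INR (fact L) * poch (nu + 1) L)))
    with ((2 - delta0 L) * (w ^ L * w ^ L) / ((4 ^ L * 4 ^ L) * INR (fact L) ^ 2 * poch (mu + 1) L * poch (nu + 1) L))
    by (field; repeat split; auto; try lra; apply pow_nonzero; lra).
  rewrite Wk, F4.
  field. repeat split; auto; lra.
Qed.

Theorem theorem2 (k mu nu : R)
  (Hmu : not_nonpos_int (mu + 1)) (Hnu : not_nonpos_int (nu + 1))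
  (Hmunu : not_nonpos_int (mu + nu + 1)) :
  is_series
    (fun L : nat =>
       Rpower 2 (mu + nu) * Gamma (mu + 1) * Gamma (nu + 1) *
       ((-1) ^ (2 * L) * k ^ (4 * L) * Rpower 2 (- 8 * INR L - mu - nu)
          * (2 - delta0 L)
        / ((INR (fact L)) ^ 2 * Gamma (INR L + mu + 1) * Gamma (INR L + nu + 1))
        * hypergeom (INR L + 1/2 :: nil) (2 * INR L + 1 :: INR L + mu + 1 :: nil) (- k ^ 2 / 4)
        * hypergeom (INR L + 1/2 :: nil) (2 * INR L + 1 :: INR L + nu + 1 :: nil) (- k ^ 2 / 4)))
    (hypergeom (1/2 :: mu/2 + nu/2 + 1/2 :: mu/2 + nu/2 + 1 :: nil)
               (1 :: mu + 1 :: nu + 1 :: mu + nu + 1 :: nil) (- k ^ 2)).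
Proof.
  pose proof (not_nonpos_shift _ Hmu) as Ha.
  pose proof (not_nonpos_shift _ Hnu) as Hb.
  set (w := - k ^ 2 / 4).
  assert (Hz: forall L n, (n < L)%nat -> Cf L (mu + 1) (nu + 1) w n = 0)
    by (intros; unfold Cf; apply reindex_zero; lia).
  pose proof (fubini_tri (fun L n => Cf L (mu + 1) (nu + 1) w n) (ebound (mu + 1) (nu + 1) w)
    (fun L => Kc L (mu + 1) (nu + 1) w * (Series (hterm L (mu + 1) w) * Series (hterm L (nu + 1) w)))
    Hz (fun L n => Cf_bound L _ _ w n Ha Hb) (ebound_series _ _ w Ha Hb)
    (fun L => row_series L _ _ w Ha Hb)) as Fb.
  assert (HS: hypergeom (1/2 :: mu/2 + nu/2 + 1/2 :: mu/2 + nu/2 + 1 :: nil)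
               (1 :: mu + 1 :: nu + 1 :: mu + nu + 1 :: nil) (- k ^ 2)
     = Series (fun n => sum_f_R0 (fun L => Cf L (mu + 1) (nu + 1) w n) n)).
  { unfold hypergeom. apply Series_ext. intros n. unfold w. symmetry. apply diag_identity; auto. }
  rewrite HS.
  eapply is_series_ext; [|exact Fb].
  intros L. cbv beta. unfold w. symmetry. apply row_value; auto.
Qed.
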